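(* Let $X$ be a smooth real Banach space of finite dimension $n$, let $S_X$ be its unit sphere, and let $S^n_{X,>0}$ be the set of $n$-tuples $(v_1,\dots,v_n)\in S_X^n$ (viewed as $n\times n$ real matrices with rows $v_i$) that are linearly independent, regarded as a differentiable manifold. Then $\{v_1,\dots,v_n\}$ is an Auerbach basis of $X$ if and only if $(v_1,\dots,v_n)$ is a critical point of the determinant function $\det: S^n_{X,>0}\to\mathbb{R}$, i.e. $\sum_{k=1}^n \det(v_1,\dots,v_{k-1},u_k,v_{k+1},\dots,v_n)=0$ for all $u_k$ in the tangent space $T_{v_k}S_X$, $k=1,\dots,n$.
   Context: A Banach space is smooth if at every point of the unit sphere there is exactly one supporting hyperplane of the unit ball (equivalently, the norm is Gateaux differentiable at every nonzero point). In a real normed space $X$, $x\perp_B y$ (Birkhoff–James orthogonality) means $\|x\|\le\|x+\lambda y\|$ for all $\lambda\in\mathbb{R}$. A basis $\mathcal{B}$ of $X$ is an Auerbach basis if every $v\in\mathcal{B}$ satisfies $\|v\|=1$ and $v\perp_B w$ for all $w\in\mathrm{span}(\mathcal{B}\setminus\{v\})$. *)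

(* Defs.v *)
From HB Require Import structures.
From mathcomp Require Import all_boot all_order all_algebra.
From mathcomp Require Import all_classical all_reals all_analysis.
Set Implicit Arguments. Unset Strict Implicit. Unset Printing Implicit Defensive.
Import Order.TTheory GRing.Theory Num.Theory.
Import numFieldNormedType.Exports.
Local Open Scope ring_scope.

(* A finite-dimensional real normed space of dimension n is modelled as the
   coordinate space 'rV[R]_n equipped with an arbitrary norm N. *)
Definition is_norm (R : realType) (n : nat) (N : 'rV[R]_n -> R) : Prop :=
  [/\ forall x, N x = 0 -> x = 0,
      forall (a : R) x, N (a *: x) = `|a| * N x
    & forall x y, N (x + y) <= N x + N y].

Definition smooth_norm (R : realType) (n : nat) (N : 'rV[R]_n -> R) : Prop :=
  forall x : 'rV[R]_n, x != 0 ->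
    (forall u : 'rV[R]_n, derivable N x u) /\
    (forall (a : R) (u w : 'rV[R]_n),
        'D_(a *: u + w) N x = a * 'D_u N x + 'D_w N x).

Definition BJ_orth (R : realType) (n : nat) (N : 'rV[R]_n -> R)
  (x y : 'rV[R]_n) : Prop :=
  forall l : R, N x <= N (x + l *: y).

(* The rows of V form an Auerbach basis (V is assumed to have linearly
   independent rows): every row has norm 1 and is Birkhoff-James orthogonal
   to every vector in the span of the other rows. *)
Definition auerbach_basis (R : realType) (n : nat) (N : 'rV[R]_n -> R)
  (V : 'M[R]_n) : Prop :=
  forall i : 'I_n, N (row i V) = 1 /\
    forall c : 'I_n -> R,
      BJ_orth N (row i V) (\sum_(j < n | j != i) c j *: row j V).

Definition tangent_vec (R : realType) (n : nat) (N : 'rV[R]_n -> R)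
  (v u : 'rV[R]_n) : Prop :=
  exists c : R -> 'rV[R]_n,
    [/\ forall t, N (c t) = 1, c 0 = v, derivable c 0 1 & 'D_1 c 0 = u].

Definition replace_row (R : realType) (n : nat) (V : 'M[R]_n) (k : 'I_n)
  (u : 'rV[R]_n) : 'M[R]_n :=
  \matrix_(i, j) (if i == k then u 0 j else V i j).

(* Main.v *)
Require Import Defs.
From HB Require Import structures.
From mathcomp Require Import all_boot all_order all_algebra.
From mathcomp Require Import all_classical all_reals all_analysis.
From mathcomp Require Import ring lra.
Import Order.TTheory GRing.Theory Num.Theory.
Import numFieldNormedType.Exports.
Local Open Scope classical_set_scope.
Local Open Scope ring_scope.

Set Implicit Arguments.
Unset Strict Implicit.
Section NormFacts.
Variables (R : realType) (n : nat) (N : 'rV[R]_n -> R) (hN : is_norm N).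

Lemma N0 : N 0 = 0.
Proof. case: hN => _ hZ _. by rewrite -(scale0r 0) hZ normr0 mul0r. Qed.

Lemma NZ a x : N (a *: x) = `|a| * N x.
Proof. by case: hN => _ hZ _. Qed.

Lemma ND x y : N (x + y) <= N x + N y.
Proof. by case: hN => _ _ H; apply: H. Qed.

Lemma NN x : N (- x) = N x.
Proof. by rewrite -scaleN1r NZ normrN normr1 mul1r. Qed.

Lemma Nge0 x : 0 <= N x.
Proof.
have := ND x (- x); rewrite subrr N0 NN.
by rewrite -mulr2n pmulrn_lge0.
Qed.

Lemma Neq0 x : N x = 0 -> x = 0.
Proof. by case: hN => H _ _; apply: H. Qed.

Lemma NB x y : `|N x - N y| <= N (x - y).
Proof.


have := ND (y - x) x; rewrite subrK -(NN (y - x)) opprB => h1.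
have := ND (x - y) y; rewrite subrK => h2.
rewrite ler_norml; apply/andP; split; lra.
Qed.

Lemma Nsum (I : Type) (r : seq I) (P : pred I) (F : I -> 'rV[R]_n) :
  N (\sum_(i <- r | P i) F i) <= \sum_(i <- r | P i) N (F i).
Proof.
elim/big_ind2: _ => [|a b c d hab hcd|i _]; first by rewrite N0.
  by apply: le_trans (ND _ _) (lerD hab hcd).
done.
Qed.

Lemma coord_le (x : 'rV[R]_n) j : `|x 0 j| <= `|x|.
Proof.
rewrite [leRHS]/Num.Def.normr /= mx_normrE.
by apply: le_trans; last exact: (le_bigmax _ _ (0, j)).
Qed.

Lemma Nbound : exists K : R, 0 <= K /\ forall x, N x <= K * `|x|.
Proof.
exists (\sum_(j < n) N (delta_mx 0 j)); split.
  by apply: sumr_ge0 => j _; exact: Nge0.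
move=> x.
have -> : N x = N (\sum_(j < n) x 0 j *: delta_mx 0 j).
  by rewrite {1}(matrix_sum_delta x) big_ord1.
apply: le_trans; first exact: Nsum.
rewrite mulr_suml; apply: ler_sum => j _.
rewrite NZ mulrC; apply: ler_wpM2l; first exact: Nge0.
exact: coord_le.
Qed.

Lemma Dval x y (l : R) :
  (fun h : R => h^-1 * (N (h *: y + x) - N x)) @ 0^' --> l -> 'D_y N x = l.
Proof. by move=> H; apply: cvg_lim. Qed.

Lemma D_self x : 'D_x N x = N x.
Proof.
apply: Dval; apply: cvg_near_cst.
near=> h.
have h0 : h != 0 by near: h; exact: nbhs_dnbhs_neq.
have h1 : `|h| < 1 by near: h; exact: dnbhs0_lt.
rewrite -{2}(scale1r x) -scalerDl NZ.
have -> : `|h + 1| = h + 1.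
  by apply/ger0_norm; move: h1; rewrite ltr_norml => /andP[]; lra.
by rewrite mulrDl mul1r addrK mulrA mulVf // mul1r.
Unshelve. all: by end_near. Qed.


Lemma near0'_ex (P : R -> Prop) :
  (\forall h \near (0:R)^', P h) -> exists2 e : R, 0 < e & forall h, h != 0 -> `|h| < e -> P h.
Proof.
rewrite near_withinE => /nbhs_ballP [e e0 He].
exists e => // h h0 he; apply: He => //.
by rewrite /ball /= sub0r normrN.
Qed.

Lemma D_zero x : 'D_0 N x = 0.
Proof.
apply: Dval; apply: cvg_near_cst; near=> h.
by rewrite scaler0 add0r subrr mulr0.
Unshelve. all: by end_near. Qed.

Lemma fermat x y : derivable N x y -> BJ_orth N x y -> 'D_y N x = 0.
Proof.
move=> hd hbj.
have cf : (fun h : R => h^-1 * (N (h *: y + x) - N x)) @ 0^' --> 'D_y N x := hd.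
have num h : 0 <= N (h *: y + x) - N x.
  by rewrite subr_ge0 addrC; apply: hbj.
case: (ltgtP ('D_y N x) 0) => // hL.
- have [e e0 He] := near0'_ex (cvgr_lt _ cf _ hL).
  have := He (e / 2); rewrite ger0_norm; last by lra.
  move/(_ ltac:(lra) ltac:(lra)); rewrite ltNge => /negP; case.
  apply: mulr_ge0; last exact: num.
  by rewrite invr_ge0; lra.
- have [e e0 He] := near0'_ex (cvgr_gt _ cf _ hL).
  have := He (- (e / 2)); rewrite ltr0_norm; last by lra.
  move/(_ ltac:(lra) ltac:(lra)); rewrite ltNge => /negP; case.
  apply: mulr_le0_ge0; last exact: num.
  by rewrite invr_le0; lra.
Qed.


Hypothesis hs : smooth_norm N.

Lemma D_scale x a u : x != 0 -> 'D_(a *: u) N x = a * 'D_u N x.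
Proof.
move=> x0; have [_ hl] := hs x0.
by have := hl a u 0; rewrite addr0 D_zero addr0.
Qed.

Lemma D_add x a u w : x != 0 -> 'D_(a *: u + w) N x = a * 'D_u N x + 'D_w N x.
Proof. by move=> x0; have [_ hl] := hs x0; apply: hl. Qed.

Lemma BJ_of_D x y : x != 0 -> 'D_y N x = 0 -> BJ_orth N x y.
Proof.
move=> x0 hD l; set w := l *: y.
have Dw : 'D_w N x = 0 by rewrite /w D_scale // hD mulr0.
have [hd _] := hs x0.
have cf : (fun h : R => h^-1 * (N (h *: w + x) - N x)) @ 0^' --> 'D_w N x := hd w.
rewrite Dw in cf.
rewrite leNgt; apply/negP => hlt.
set d := N x - N (x + w).
have d0 : 0 < d by rewrite /d; lra.
have d0' : - d < 0 by lra.
have [e e0 He] := near0'_ex (cvgr_gt _ cf _ d0').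
set t := Num.min (e / 2) 1.
have t0 : 0 < t by rewrite /t lt_min; apply/andP; split; lra.
have te : t < e by rewrite /t gt_min; apply/orP; left; lra.
have t1 : t <= 1 by rewrite /t ge_min; apply/orP; right.
have := He t ltac:(lra) ltac:(by rewrite ger0_norm; lra).
rewrite ltNge => /negP; apply.
have conv : N (t *: w + x) <= t * N (x + w) + (1 - t) * N x.
  have -> : t *: w + x = t *: (x + w) + (1 - t) *: x.
    by apply/rowP => j; rewrite !mxE; ring.
  apply: le_trans (ND _ _) _.
  rewrite !NZ (ger0_norm (ltW t0)) ger0_norm //; lra.
have : N (t *: w + x) - N x <= t * (- d) by rewrite /d; lra.
move=> h1.
have ti : 0 <= t^-1 by rewrite invr_ge0; lra.
have := ler_wpM2l ti h1.
by rewrite mulrA mulVf ?mul1r // gt_eqF.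
Qed.


Lemma tangent_D v u : N v = 1 -> tangent_vec N v u -> 'D_u N v = 0.
Proof.
move=> Nv [c [Nc c0 cd cD]].
have cc : (fun h : R => h^-1 *: (c h - v)) @ 0^' --> u.
  rewrite -cD -c0.
  have -> : (fun h : R => h^-1 *: (c h - c 0)) =
     (fun h : R => h^-1 *: ((c \o shift 0) (h *: 1) - c 0)).
    by apply/funext => h /=; rewrite addr0 /GRing.scale /= mulr1.
  exact: cd.
have [K [K0 HK]] := Nbound.
apply: Dval; apply/cvgr0Pnorm_lt => eps eps0.
have eK : 0 < eps / (K + 1) by apply: divr_gt0 => //; lra.
near=> h.
have hh : `|u - h^-1 *: (c h - v)| < eps / (K + 1).
  by near: h; exact: (cvgr_dist_lt _ _ cc _ eK).
have h0 : h != 0 by near: h; exact: nbhs_dnbhs_neq.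
have -> : N v = N (c h) by rewrite Nc Nv.
rewrite normrM normfV.
have e1 : h *: u + v - c h = h *: (u - h^-1 *: (c h - v)).
  by rewrite scalerBr scalerA mulfV // scale1r opprB addrA.
have b1 := NB (h *: u + v) (c h).
rewrite e1 NZ in b1.
have b2 := HK (u - h^-1 *: (c h - v)).
have hp : 0 < `|h| by rewrite normr_gt0.
rewrite ltr_pdivrMl //.
apply: (le_lt_trans b1).
rewrite ltr_pM2l //.
apply: (le_lt_trans b2).
have : K * `|u - h^-1 *: (c h - v)| <= K * (eps / (K + 1)).
  by apply: ler_wpM2l => //; apply: ltW.
move=> h2; apply: (le_lt_trans h2).
rewrite mulrA ltr_pdivrMr; last by lra.
rewrite mulrDr mulr1 mulrC ltrDl //.
Unshelve. all: by end_near. Qed.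


Lemma cvg_id0 : (fun h : R => h) @ (0:R)^' --> (0:R).
Proof. apply/cvgr0Pnorm_lt => e e0; exact: dnbhs0_lt. Qed.

Lemma D_tangent v u : N v = 1 -> 'D_u N v = 0 -> tangent_vec N v u.
Proof.
move=> Nv hD.
have v0 : v != 0 by apply/eqP => v0; move: Nv; rewrite v0 N0; lra.
have nz t : t *: u + v != 0.
  apply/eqP => e.
  have ev : v = (- t) *: u by rewrite scaleNr; apply/eqP; rewrite -subr_eq0 opprK addrC e.
  have := D_self v; rewrite {2}ev D_scale // hD mulr0 Nv; lra.
have gpos t : 0 < N (t *: u + v).
  rewrite lt_def Nge0 andbT; apply/eqP => e; move: (nz t); rewrite (Neq0 e) eqxx //.
set g := fun h : R => N (h *: u + v).
set q := fun h : R => h^-1 * (g h - 1).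
have [hd _] := hs v0.
have cq : q @ 0^' --> (0:R).
  have := hd u; rewrite /derivable => cu.
  have : (fun h : R => h^-1 * (N (h *: u + v) - N v)) @ 0^' --> 'D_u N v := cu.
  by rewrite hD Nv.
have cg : g @ 0^' --> (1:R).
  have E : {near 0^', (fun h => 1 + h * q h) =1 g}.
    near=> h => /=.
    have h0 : h != 0 by near: h; exact: nbhs_dnbhs_neq.
    by rewrite /q mulrA mulfV // mul1r addrCA subrr addr0.
  apply: cvg_trans (near_eq_cvg E) _.
  have := cvgD (cvg_cst (1:R)) (cvgM cvg_id0 cq).
  rewrite mul0r addr0; by move=> H; apply: H; exact: dnbhs_filter.
have g0 : g 0 = 1 by rewrite /g scale0r add0r Nv.
set c := fun t => (g t)^-1 *: (t *: u + v).
have cQ : (fun h : R => h^-1 *: ((c \o shift 0) (h *: 1) - c 0)) @ 0^' --> u.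
  have E : {near 0^', (fun h => (g h)^-1 *: u - ((g h)^-1 * q h) *: v) =1
     (fun h : R => h^-1 *: ((c \o shift 0) (h *: 1) - c 0))}.
    near=> h => /=.
    have h0 : h != 0 by near: h; exact: nbhs_dnbhs_neq.
    have gh : g h != 0 by rewrite gt_eqF //; exact: gpos.
    rewrite /c /q g0 addr0 /GRing.scale /= mulr1.
    apply/rowP => j; rewrite !mxE.
    field; apply/andP; split => //.
  apply: cvg_trans (near_eq_cvg E) _.
  have := cvgB (cvgZ (cvgV _ cg) (cvg_cst u)) (cvgZ (cvgM (cvgV _ cg) cq) (cvg_cst v)).
  rewrite invr1 mulr0 scale0r subr0 scale1r => H.
  by apply: H; first [exact: dnbhs_filter | exact: oner_neq0].
exists c; split.
- move=> t; have gt : 0 < g t := gpos t.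
  by rewrite NZ ger0_norm ?invr_ge0 ?(ltW gt) // mulVf // gt_eqF.
- by rewrite /c g0 scale0r add0r invr1 scale1r.
- exact: (cvgP _ cQ).
- exact: (cvg_lim _ cQ).
Unshelve. all: by end_near. Qed.

End NormFacts.
Section LinAlg.
Variables (R : realType) (n : nat) (V : 'M[R]_n).

Lemma det_replace k (u : 'rV[R]_n) :
  \det (replace_row V k u) = (u *m \adj V) 0 k.
Proof.
rewrite (expand_det_row _ k) mxE; apply: eq_bigr => j _.
rewrite !mxE eqxx; congr (_ * _).
rewrite /cofactor; congr (_ * \det _).
by apply/matrixP => a b; rewrite !mxE eq_sym (negbTE (neq_lift _ _)).
Qed.

Lemma Dk_lin k a (x y : 'rV[R]_n) :
  ((a *: x + y) *m \adj V) 0 k = a * (x *m \adj V) 0 k + (y *m \adj V) 0 k.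
Proof. by rewrite mulmxDl -scalemxAl !mxE. Qed.

Lemma Dk_row j k : (row j V *m \adj V) 0 k = (j == k)%:R * \det V.
Proof. by rewrite -row_mul mul_mx_adj !mxE mulrC mulr_natr. Qed.

Lemma Dk_span k (c : 'I_n -> R) :
  ((\sum_(j < n | j != k) c j *: row j V) *m \adj V) 0 k = 0.
Proof.
rewrite mulmx_suml summxE; apply: big1 => j jk.
by rewrite -scalemxAl mxE Dk_row (negbTE jk) mul0r mulr0.
Qed.

Lemma Dk0 k : ((0 : 'rV[R]_n) *m \adj V) 0 k = 0.
Proof. by rewrite mul0mx mxE. Qed.

End LinAlg.

Unset Implicit Arguments.
Set Strict Implicit.
Local Close Scope classical_set_scope.


Theorem mainTheorem2 (R : realType) (n : nat) (N : 'rV[R]_n -> R)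
  (hN : is_norm N) (hsmooth : smooth_norm N)
  (V : 'M[R]_n) (hV : forall i : 'I_n, N (row i V) = 1) (hfree : row_free V) :
  auerbach_basis N V <->
  (forall u : 'I_n -> 'rV[R]_n,
     (forall k : 'I_n, tangent_vec N (row k V) (u k)) ->
     \sum_(k < n) \det (replace_row V k (u k)) = 0).
Proof.
have Vu : V \in unitmx by rewrite -row_free_unit.
have dV : \det V != 0 by rewrite -unitfE -unitmxE.
have nz k : row k V != 0.
  by apply/eqP => e; move: (hV k); rewrite e (N0 hN); lra.
split.
- move=> HA u hu; apply: big1 => k _.
  rewrite det_replace.
  set a := u k *m invmx V.
  have eu : u k = a 0 k *: row k V + \sum_(j < n | j != k) a 0 j *: row j V.
    by rewrite -{1}(mulmxKV Vu (u k)) -/a mulmx_sum_row (bigD1 k).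
  have f0 : 'D_(u k) N (row k V) = 0 by apply: (tangent_D hN) => //; exact: hu.
  have fy : 'D_(\sum_(j < n | j != k) a 0 j *: row j V) N (row k V) = 0.
    apply: fermat; first by have [hd _] := hsmooth _ (nz k); exact: hd.
    by have [_ hb] := HA k; exact: hb.
  have ak : a 0 k = 0.
    by move: f0; rewrite eu (D_add hsmooth) // fy (D_self hN) hV addr0 mulr1.
  by rewrite eu Dk_lin Dk_span ak mul0r addr0.
- move=> HS i; split => // c.
  set y := \sum_(j < n | j != i) c j *: row j V.
  set s := 'D_y N (row i V).
  apply: (BJ_of_D hN hsmooth (nz i)).
  set w := (- s) *: row i V + y.
  have fw : 'D_w N (row i V) = 0.
    by rewrite /w (D_add hsmooth) // (D_self hN) hV mulr1 -/s addNr.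
  have tw : tangent_vec N (row i V) w by apply: (D_tangent hN hsmooth) => //.
  have := HS (fun k => if k == i then w else 0).
  have H0 k : tangent_vec N (row k V) (if k == i then w else 0).
    case: eqP => [->//|_]; apply: (D_tangent hN hsmooth) => //; exact: D_zero.
  move/(_ H0).
  rewrite (bigD1 i) //= eqxx big1 ?addr0; last first.
    by move=> k /negbTE ->; rewrite det_replace Dk0.
  rewrite det_replace /w Dk_lin Dk_row eqxx mul1r Dk_span addr0.
  by move/eqP; rewrite mulf_eq0 (negbTE dV) orbF oppr_eq0 => /eqP.
Qed.
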